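(* Let $S_0=\sum_{k=0}^\infty \frac{1}{(3k+1)(k+1)}=\frac{\pi\sqrt3}{12}+\frac34\log 3$. Then \begin{align*} &\sum_{n=0}^\infty \frac{9n+7}{(n+1)(3n+1)}\,\frac{(\frac53)_n}{(\frac32)_n}\,\frac{1}{4^n}=6S_0,\\ &\sum_{n=0}^\infty \frac{9n+5}{n+1}\,\frac{(\frac13)_n^2}{(\frac53)_n(\frac76)_n}\,\frac{1}{4^n}=4S_0,\\ &\sum_{n=0}^\infty (189n^2+222n+61)\,\frac{(\frac13)_n^2(1)_n}{(\frac76)_n(\frac32)_n^2}\,\frac{1}{64^n}=48S_0,\\ &\sum_{n=0}^\infty \frac{30n^2+35n+11}{(1+2n)(1+n)}\,\frac{(\frac13)_n}{(\frac76)_n}\,\frac{1}{(-4)^n}=8S_0,\\ &\sum_{n=0}^\infty \frac{90n^2+111n+31}{(1+6n)(2+3n)(1+n)}\,\frac{(\frac13)_n}{(\frac32)_n}\,\frac{1}{(-4)^n}=12S_0. \end{align*}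
   Context: $(x)_n=\Gamma(x+n)/\Gamma(x)=x(x+1)\cdots(x+n-1)$ denotes the rising factorial (Pochhammer symbol). *)

(* Defs.v *)
From Stdlib Require Import Reals.
From Coquelicot Require Import Coquelicot.
Open Scope R_scope.

Fixpoint poch (x : R) (n : nat) : R :=
  match n with
  | O => 1
  | S m => poch x m * (x + INR m)
  end.

Definition S0 : R := PI * sqrt 3 / 12 + 3 / 4 * ln 3.

(* Main.v *)
Require Import Defs.
From Stdlib Require Import Reals Lra Lia.
From Coquelicot Require Import Coquelicot.
Open Scope R_scope.

Fixpoint sR (f : nat -> R) (N : nat) : R :=
  match N with O => 0 | S m => sR f m + f m end.
Fixpoint pR (f : nat -> R) (N : nat) : R :=
  match N with O => 1 | S m => pR f m * f m end.

Lemma sum_n_sR (f : nat -> R) N : sum_n f N = sR f (S N).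
Proof.
  induction N as [|N IH].
  - rewrite sum_O. simpl. ring.
  - rewrite sum_Sn, IH. simpl. unfold plus; simpl. ring.
Qed.

Lemma sR_ext f g N : (forall i, (i < N)%nat -> f i = g i) -> sR f N = sR g N.
Proof.
  induction N; intros H; simpl; auto.
  rewrite IHN by (intros; apply H; lia). rewrite H by lia. auto.
Qed.

Lemma sR_plus f g N : sR (fun i => f i + g i) N = sR f N + sR g N.
Proof. induction N; simpl; [ring|rewrite IHN; ring]. Qed.
Lemma sR_scal c f N : sR (fun i => c * f i) N = c * sR f N.
Proof. induction N; simpl; [ring|rewrite IHN; ring]. Qed.
Lemma sR_minus f g N : sR (fun i => f i - g i) N = sR f N - sR g N.
Proof. induction N; simpl; [ring|rewrite IHN; ring]. Qed.
Lemma sR_tele f N : sR (fun i => f (S i) - f i) N = f N - f O.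
Proof. induction N; simpl; [ring|rewrite IHN; ring]. Qed.

Lemma sR_abs f N : Rabs (sR f N) <= sR (fun i => Rabs (f i)) N.
Proof.
  induction N; simpl. rewrite Rabs_R0; lra.
  eapply Rle_trans. apply Rabs_triang. lra.
Qed.

Lemma wz_finite (F G : nat -> nat -> R) :
  (forall n k, (n < k)%nat -> F (S n) k - F n k = G n (S k) - G n k) ->
  forall K, sR (F O) K = sR (fun n => F n n + G n (S n)) K - sR (fun n => G n K) K.
Proof.
  intros HWZ K. induction K as [|K IH]; simpl. ring.
  assert (E : sR (fun n => G n (S K)) K - sR (fun n => G n K) K
              = sR (fun n => F (S n) K - F n K) K).
  { rewrite <- sR_minus. apply sR_ext. intros i Hi. rewrite HWZ by lia. ring. }
  rewrite (sR_tele (fun i => F i K)) in E. simpl in E. lra.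
Qed.

Lemma geo_bound (g : nat -> R) (N : nat) (r : R) :
  0 <= r < 1 ->
  (forall n, (S n < N)%nat -> Rabs (g (S n)) <= r * Rabs (g n)) ->
  sR (fun n => Rabs (g n)) N <= Rabs (g O) / (1 - r).
Proof.
  intros Hr H.
  assert (Hp : forall n, (n < N)%nat -> Rabs (g n) <= r ^ n * Rabs (g O)).
  { induction n; intros Hn. simpl; lra.
    eapply Rle_trans. apply H; lia.
    simpl. rewrite Rmult_assoc. apply Rmult_le_compat_l. lra. apply IHn. lia. }
  assert (Hs : forall M, (M <= N)%nat -> sR (fun n => Rabs (g n)) M <= Rabs (g O) * (1 - r ^ M) / (1 - r)).
  { induction M; intros HM; simpl.
    - unfold Rdiv. replace (1 - 1) with 0 by ring. rewrite Rmult_0_r, Rmult_0_l. lra.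
    - eapply Rle_trans. apply Rplus_le_compat. apply IHM; lia. apply Hp; lia.
      apply Req_le. field. lra. }
  eapply Rle_trans. apply Hs; lia.
  unfold Rdiv. apply Rmult_le_compat_r. apply Rlt_le, Rinv_0_lt_compat; lra.
  pose proof (pow_le r N ltac:(lra)). pose proof (Rabs_pos (g O)). nra.
Qed.

Lemma err_to_0 (G : nat -> nat -> R) (r : R) :
  0 <= r < 1 ->
  (forall n k, (S n < k)%nat -> Rabs (G (S n) k) <= r * Rabs (G n k)) ->
  is_lim_seq (fun K => G O K) 0 ->
  is_lim_seq (fun K => sR (fun n => G n K) K) 0.
Proof.
  intros Hr Hrat Hlim.
  apply is_lim_seq_abs_0.
  apply (is_lim_seq_le_le (fun _ => 0) _ (fun K => Rabs (G O K) / (1 - r))).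
  - intros K. split. apply Rabs_pos.
    eapply Rle_trans. apply sR_abs. apply (geo_bound (fun n => G n K)). auto.
    intros n Hn. apply Hrat. auto.
  - apply is_lim_seq_const.
  - replace (Finite 0) with (Rbar_mult (Finite 0) (Finite (/ (1 - r)))) by (simpl; f_equal; ring).
    unfold Rdiv. apply is_lim_seq_scal_r. apply is_lim_seq_abs in Hlim. simpl in Hlim.
    rewrite Rabs_R0 in Hlim. auto.
Qed.

Lemma wz_series (F G : nat -> nat -> R) (tt ss : nat -> R) (lam mu S0 rr : R) :
  lam <> 0 -> 0 <= rr < 1 ->
  (forall n k, (n < k)%nat -> F (S n) k - F n k = G n (S k) - G n k) ->
  (forall k, F O k = mu * ss k) ->
  (forall n, F n n + G n (S n) = lam * tt n) ->
  (forall n k, (S n < k)%nat -> Rabs (G (S n) k) <= rr * Rabs (G n k)) ->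
  is_lim_seq (fun K => G O K) 0 ->
  is_series ss S0 ->
  is_series tt (mu / lam * S0).
Proof.
  intros Hl Hr HWZ HF0 Hd Hrat HG0 HS.
  assert (Herr := err_to_0 G rr Hr Hrat HG0).
  apply is_lim_seq_incr_1 in Herr.
  assert (HS' : is_lim_seq (sum_n ss) S0) by exact HS.
  change (is_lim_seq (sum_n tt) (mu / lam * S0)).
  assert (E : forall N, sum_n tt N = / lam * (mu * sum_n ss N + sR (fun n => G n (S N)) (S N))).
  { intros N. rewrite !sum_n_sR. match goal with |- ?a = ?b => change (@eq R a b) end.
    pose proof (wz_finite F G HWZ (S N)) as W.
    assert (A : sR (F O) (S N) = mu * sR ss (S N)).
    { rewrite <- sR_scal. apply sR_ext. intros; auto. }
    assert (B : sR (fun n => F n n + G n (S n)) (S N) = lam * sR tt (S N)).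
    { rewrite <- sR_scal. apply sR_ext. intros; auto. }
    rewrite <- A, W, B. field. exact Hl. }
  eapply is_lim_seq_ext. intros N. symmetry. apply E.
  assert (L1 : is_lim_seq (fun N => mu * sum_n ss N) (mu*S0)) by exact (is_lim_seq_scal_l _ mu S0 HS').
  assert (L2 := is_lim_seq_plus' _ _ _ _ L1 Herr).
  assert (L3 : is_lim_seq (fun N => / lam * (mu * sum_n ss N + sR (fun n => G n (S N)) (S N))) (/ lam * (mu * S0 + 0)))
    by exact (is_lim_seq_scal_l _ (/ lam) _ L2).
  replace (mu / lam * S0) with (/ lam * (mu * S0 + 0)) by (field; auto). exact L3.
Qed.

Definition Kg (r1 r2 : nat -> nat -> R) (n k : nat) : R :=
  pR (fun i => r1 i O) n * pR (r2 n) k.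

Lemma Kg_Sk r1 r2 n k : Kg r1 r2 n (S k) = Kg r1 r2 n k * r2 n k.
Proof. unfold Kg; simpl; ring. Qed.

Lemma Kg_Sn r1 r2 :
  (forall n k, r1 n k * r2 (S n) k = r2 n k * r1 n (S k)) ->
  forall n k, Kg r1 r2 (S n) k = Kg r1 r2 n k * r1 n k.
Proof.
  intros Hc n k. induction k as [|k IH].
  - unfold Kg; simpl; ring.
  - rewrite !Kg_Sk, IH. rewrite Rmult_assoc, Hc. ring.
Qed.

Lemma wz_gen r1 r2 (P : nat -> R) (Q : nat -> nat -> R) :
  (forall n k, r1 n k * r2 (S n) k = r2 n k * r1 n (S k)) ->
  (forall n k, r1 n k * P (S n) - P n = r2 n k * Q n (S k) - Q n k) ->
  forall n k, Kg r1 r2 (S n) k * P (S n) - Kg r1 r2 n k * P n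
            = Kg r1 r2 n (S k) * Q n (S k) - Kg r1 r2 n k * Q n k.
Proof.
  intros Hc Hb n k. rewrite Kg_Sn by auto. rewrite Kg_Sk.
  transitivity (Kg r1 r2 n k * (r1 n k * P (S n) - P n)). ring.
  rewrite Hb. ring.
Qed.

Lemma diag_gen r1 r2 (P : nat -> R) (Q : nat -> nat -> R) (t : nat -> R) lam :
  (forall n k, r1 n k * r2 (S n) k = r2 n k * r1 n (S k)) ->
  P O + r2 O O * Q O (S O) = lam * t O ->
  (forall n, P n + r2 n n * Q n (S n) <> 0) ->
  (forall n, t (S n) * (P n + r2 n n * Q n (S n))
             = t n * (r1 n n * r2 (S n) n * (P (S n) + r2 (S n) (S n) * Q (S n) (S (S n))))) ->
  forall n, Kg r1 r2 n n * P n + Kg r1 r2 n (S n) * Q n (S n) = lam * t n.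
Proof.
  intros Hc H0 Hnz Hst.
  assert (M : forall n, Kg r1 r2 n n * (P n + r2 n n * Q n (S n)) = lam * t n).
  { induction n as [|n IH].
    - unfold Kg; simpl. rewrite <- H0. ring.
    - assert (E : Kg r1 r2 (S n) (S n) = Kg r1 r2 n n * r1 n n * r2 (S n) n).
      { rewrite Kg_Sk, Kg_Sn by auto. ring. }
      rewrite E. specialize (Hnz n).
      apply (Rmult_eq_reg_r (P n + r2 n n * Q n (S n))); auto.
      rewrite (Rmult_assoc lam (t (S n))), Hst.
      transitivity ((Kg r1 r2 n n * (P n + r2 n n * Q n (S n))) *
                    (r1 n n * r2 (S n) n * (P (S n) + r2 (S n) (S n) * Q (S n) (S (S n))))). ring.
      rewrite IH. ring. }
  intros n. rewrite Kg_Sk, <- M. ring.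
Qed.

Lemma ratio_gen r1 r2 (Q : nat -> nat -> R) c :
  (forall n k, r1 n k * r2 (S n) k = r2 n k * r1 n (S k)) ->
  (forall n k, 0 < Q n k) ->
  (forall n k, (S n < k)%nat -> Rabs (r1 n k * Q (S n) k) <= c * Q n k) ->
  forall n k, (S n < k)%nat -> Rabs (Kg r1 r2 (S n) k * Q (S n) k) <= c * Rabs (Kg r1 r2 n k * Q n k).
Proof.
  intros Hc HQ Hr n k H. rewrite Kg_Sn by auto.
  replace (Kg r1 r2 n k * r1 n k * Q (S n) k) with (Kg r1 r2 n k * (r1 n k * Q (S n) k)) by ring.
  rewrite (Rabs_mult (Kg r1 r2 n k) (r1 n k * Q (S n) k)), (Rabs_mult (Kg r1 r2 n k) (Q n k)). rewrite (Rabs_pos_eq (Q n k)) by (apply Rlt_le; auto).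
  pose proof (Rabs_pos (Kg r1 r2 n k)). specialize (Hr n k H).
  replace (c * (Rabs (Kg r1 r2 n k) * Q n k)) with (Rabs (Kg r1 r2 n k) * (c * Q n k)) by ring.
  apply Rmult_le_compat_l; auto.
Qed.

Lemma pR_ext f g N : (forall i, (i < N)%nat -> f i = g i) -> pR f N = pR g N.
Proof.
  induction N; intros H; simpl; auto.
  rewrite IHN by (intros; apply H; lia). rewrite H by lia. auto.
Qed.

Lemma Kg0 r1 r2 :
  (forall k, r2 O k = (3 * INR k + 1) * (INR k + 1) / ((3 * INR (S k) + 1) * (INR (S k) + 1))) ->
  forall k, Kg r1 r2 O k = 1 / ((3 * INR k + 1) * (INR k + 1)).
Proof.
  intros H k. unfold Kg. simpl pR at 1. rewrite Rmult_1_l.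
  induction k as [|k IH].
  - simpl. field.
  - simpl pR. rewrite IH, H. pose proof (pos_INR k). rewrite !S_INR. field. split; lra.
Qed.

Lemma poch_pos a n : 0 < a -> 0 < poch a n.
Proof.
  intros Ha. induction n; simpl. lra. pose proof (pos_INR n). apply Rmult_lt_0_compat; lra.
Qed.

Ltac pos := match goal with
 | |- 0 < _ * _ => apply Rmult_lt_0_compat; pos
 | |- 0 < / _ => apply Rinv_0_lt_compat; pos
 | |- 0 < _ / _ => apply Rdiv_lt_0_compat; pos
 | |- 0 < poch _ _ => apply poch_pos; lra
 | |- 0 < _ ^ _ => apply pow_lt; lra
 | |- _ => nra
 end.

Ltac pos0 := repeat (apply Rplus_le_le_0_compat); repeat (apply Rmult_le_pos); try (apply pow_le); lra.

Ltac nz1 := match goal with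
  | |- poch _ _ <> 0 => apply Rgt_not_eq, poch_pos; lra
  | |- _ ^ _ <> 0 => apply pow_nonzero; lra
  | |- _ <> 0 => apply Rgt_not_eq; unfold Rgt; pos
  end.
Ltac nzs := repeat match goal with
  | |- _ /\ _ => split
  | |- _ <> 0 => nz1
  end.

Lemma G0lim a b : 0 <= a -> 0 <= b ->
  forall (f : nat -> R), (forall K, f K = a + b * INR K) ->
  is_lim_seq (fun K => 1 / ((3 * INR K + 1) * (INR K + 1)) * f K) 0.
Proof.
  intros Ha Hb f Hf.
  apply (is_lim_seq_le_le (fun _ => 0) _ (fun K => (a + b) * / INR (S K))).
  - intros K. rewrite Hf. pose proof (pos_INR K). rewrite S_INR. split.
    + apply Rmult_le_pos. apply Rlt_le. pos. nra.
    + apply (Rmult_le_reg_r ((3 * INR K + 1) * (INR K + 1))). pos.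
      replace (1 / ((3 * INR K + 1) * (INR K + 1)) * (a + b * INR K) * ((3 * INR K + 1) * (INR K + 1)))
        with (a + b * INR K) by (field; split; lra).
      replace ((a + b) * / (INR K + 1) * ((3 * INR K + 1) * (INR K + 1))) with ((a+b) * (3 * INR K + 1))
        by (field; lra).
      nra.
  - apply is_lim_seq_const.
  - replace (Finite 0) with (Rbar_mult (a + b) 0) by (simpl; f_equal; ring).
    apply is_lim_seq_scal_l.
    assert (H1 : is_lim_seq (fun n => INR (S n)) p_infty) by (apply (is_lim_seq_incr_1 INR); apply is_lim_seq_INR).
    pose proof (is_lim_seq_inv _ _ H1 ltac:(discriminate)) as H2. simpl in H2. exact H2.
Qed.


Lemma sR_S f N : sR f (S N) = sR f N + f N.
Proof. reflexivity. Qed.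

Definition qq (x : R) := 1 + x + x ^ 2.
Lemma qq_pos x : 0 < qq x.
Proof. unfold qq. nra. Qed.

Definition gg (x : R) := / 2 * ln (1 + x + x ^ 2) + / sqrt 3 * atan ((2 * x + 1) / sqrt 3).

Lemma sqrt3_sq : sqrt 3 * sqrt 3 = 3.
Proof. apply sqrt_sqrt. lra. Qed.
Lemma sqrt3_pos : 0 < sqrt 3.
Proof. apply sqrt_lt_R0. lra. Qed.

Lemma aux_at (y : R) : / sqrt 3 * (2 * 1 * / sqrt 3 * / (1 + y * / sqrt 3 * (y * / sqrt 3 * 1))) = 2 / (3 + y * y).
Proof.
  pose proof sqrt3_pos. pose proof sqrt3_sq.
  replace (/ sqrt 3 * (2 * 1 * / sqrt 3 * / (1 + y * / sqrt 3 * (y * / sqrt 3 * 1))))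
    with (2 / (sqrt 3 * sqrt 3 + y * y)).
  - rewrite H0. auto.
  - field. repeat split; nra.
Qed.

Lemma gg_deriv x : is_derive gg x ((1 + x) / qq x).
Proof.
  unfold gg. auto_derive.
  - pose proof (qq_pos x). unfold qq in H. simpl in *. lra.
  - rewrite aux_at. pose proof (qq_pos x). unfold qq in *. field. split; nra.
Qed.

Lemma is_derive_sR (F : nat -> R -> R) (F' : nat -> R) N x :
  (forall k, is_derive (F k) x (F' k)) ->
  is_derive (fun y => sR (fun k => F k y) N) x (sR F' N).
Proof.
  intros H. induction N as [|N IH]; simpl.
  - auto_derive; auto.
  - apply (is_derive_plus (fun y => sR (fun k => F k y) N) (F N)); auto.
Qed.

Definition term (k : nat) (y : R) := y ^ (3*k+1) / INR (3*k+1) - y ^ (3*k+3) / INR (3*k+3).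

Lemma term_deriv k x : is_derive (term k) x (x ^ (3*k) - x ^ (3*k+2)).
Proof.
  unfold term. auto_derive. auto.
  match goal with |- ?a = ?b => change (@eq R a b) end.
  replace (k + (k + (k + 0)))%nat with (3*k)%nat by lia.
  replace (Nat.pred (3*k+1)) with (3*k)%nat by lia.
  replace (Nat.pred (3*k+3)) with (3*k+2)%nat by lia.
  assert (0 < INR (3*k+1)) by (apply lt_0_INR; lia).
  assert (0 < INR (3*k+3)) by (apply lt_0_INR; lia).
  field. lra.
Qed.

Lemma closed_form N x : sR (fun k => x ^ (3*k) - x ^ (3*k+2)) N * qq x = (1 + x) * (1 - x ^ (3*N)).
Proof.
  induction N as [|N IH].
  - simpl. ring.
  - rewrite sR_S, Rmult_plus_distr_r, IH. unfold qq.
    replace (3 * S N)%nat with (3*N+3)%nat by lia. rewrite !pow_add. ring.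
Qed.

Lemma isd_plus f g x a b c : is_derive f x a -> is_derive g x b -> c = a + b -> is_derive (fun y => f y + g y) x c.
Proof. intros Ha Hb ->. apply (is_derive_plus f g); auto. Qed.
Lemma isd_opp f x a c : is_derive f x a -> c = - a -> is_derive (fun y => - f y) x c.
Proof. intros Ha ->. apply (is_derive_opp f); auto. Qed.

Definition hh (N : nat) (x : R) := gg x - sR (fun k => term k x) N.

Lemma hh_deriv N x : is_derive (hh N) x ((1 + x) * x ^ (3*N) / qq x).
Proof.
  unfold hh.
  replace ((1 + x) * x ^ (3*N) / qq x) with ((1 + x) / qq x - sR (fun k => x ^ (3*k) - x ^ (3*k+2)) N).
  - apply (is_derive_minus gg (fun y => sR (fun k => term k y) N)). apply gg_deriv.
    apply (is_derive_sR term (fun k => x ^ (3*k) - x ^ (3*k+2))). intros. apply term_deriv.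
  - pose proof (qq_pos x). pose proof (closed_form N x).
    apply (Rmult_eq_reg_r (qq x)); [|lra].
    rewrite Rmult_minus_distr_r, H0. field. lra.
Qed.

Lemma hh_bounds N : 0 <= hh N 1 - hh N 0 <= / INR (3*N+1).
Proof.
  assert (HN : 0 < INR (3*N+1)) by (apply lt_0_INR; lia).
  split.
  - apply Rle_plus_epsilon. intros eps He.
    assert (L := incr_function_le (fun x => hh N x + eps * x) (Finite 0) (Finite 1)
                   (fun x => (1 + x) * x ^ (3*N) / qq x + eps)).
    assert (L2 : hh N 0 + eps * 0 < hh N 1 + eps * 1).
    { apply L; try (simpl; lra).
      - intros x _ _. apply (is_derive_plus (hh N) (fun x => eps * x)). apply hh_deriv.
        auto_derive; auto. ring.
      - intros x H0 H1. simpl in H0, H1. pose proof (qq_pos x). apply Rlt_gt. cbv beta.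
        assert (0 <= (1 + x) * x ^ (3*N) / qq x).
        { apply Rdiv_le_0_compat; auto. apply Rmult_le_pos. lra. apply pow_le. lra. }
        lra. }
    lra.
  - apply Rle_plus_epsilon. intros eps He.
    assert (L := incr_function_le (fun x => - hh N x + x ^ (3*N+1) / INR (3*N+1) + eps * x) (Finite 0) (Finite 1)
                   (fun x => x ^ (3*N+2) / qq x + eps)).
    assert (L2 : - hh N 0 + 0 ^ (3*N+1) / INR (3*N+1) + eps * 0 < - hh N 1 + 1 ^ (3*N+1) / INR (3*N+1) + eps * 1).
    { apply L; try (simpl; lra).
      - intros x _ _.
        apply (isd_plus (fun x => - hh N x + x ^ (3*N+1) / INR (3*N+1)) (fun x => eps * x) x
                 (- ((1 + x) * x ^ (3*N) / qq x) + x ^ (3*N)) eps).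
        apply (isd_plus (fun x => - hh N x) (fun x => x ^ (3*N+1) / INR (3*N+1)) x
                 (- ((1 + x) * x ^ (3*N) / qq x)) (x ^ (3*N))).
        apply (isd_opp (hh N) x ((1 + x) * x ^ (3*N) / qq x)). apply hh_deriv. reflexivity.
        auto_derive. auto. match goal with |- ?a = ?b => change (@eq R a b) end. replace (N + (N + (N + 0)))%nat with (3*N)%nat by lia. replace (Nat.pred (3*N+1)) with (3*N)%nat by lia. field. lra.
        reflexivity.
        auto_derive; auto. ring.
        pose proof (qq_pos x). unfold qq in *.
        rewrite !pow_add. field. lra.
      - intros x H0 H1. simpl in H0, H1. pose proof (qq_pos x). apply Rlt_gt. cbv beta.
        assert (0 <= x ^ (3*N+2) / qq x).
        { apply Rdiv_le_0_compat; auto. apply pow_le. lra. }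
        lra. }
    rewrite pow1 in L2. rewrite pow_i in L2 by lia. unfold Rdiv in L2 at 1. lra.
Qed.

Lemma atan_sqrt3 : atan (sqrt 3) = PI / 3.
Proof. rewrite <- tan_PI3. apply atan_tan. pose proof PI_RGT_0. lra. Qed.
Lemma atan_isqrt3 : atan (1 / sqrt 3) = PI / 6.
Proof. rewrite <- tan_PI6. apply atan_tan. pose proof PI_RGT_0. lra. Qed.

Lemma gg_diff : 3 / 2 * (gg 1 - gg 0) = S0.
Proof.
  unfold gg, S0. pose proof sqrt3_pos. pose proof sqrt3_sq.
  replace ((2 * 1 + 1) / sqrt 3) with (sqrt 3) by (replace (2 * 1 + 1) with (sqrt 3 * sqrt 3) by (rewrite H0; ring); field; lra).
  replace ((2 * 0 + 1) / sqrt 3) with (1 / sqrt 3) by (field; lra).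
  rewrite atan_sqrt3, atan_isqrt3.
  replace (1 + 1 + 1 ^ 2) with 3 by ring. replace (1 + 0 + 0 ^ 2) with 1 by ring. rewrite ln_1.
  assert (Hi : / sqrt 3 = sqrt 3 / 3).
  { apply (Rmult_eq_reg_l (sqrt 3)); [|lra]. rewrite Rinv_r by lra.
    unfold Rdiv. rewrite <- Rmult_assoc, H0. field. }
  rewrite Hi. lra.
Qed.

Lemma partial_S0 N : sR (fun k => 1 / ((3 * INR k + 1) * (INR k + 1))) N
  = 3 / 2 * (gg 1 - gg 0) - 3 / 2 * (hh N 1 - hh N 0).
Proof.
  unfold hh.
  assert (E0 : sR (fun k => term k 0) N = 0).
  { induction N; simpl; auto. rewrite IHN. unfold term. rewrite !pow_i by lia. unfold Rdiv. ring. }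
  assert (E1 : sR (fun k => term k 1) N = 2 / 3 * sR (fun k => 1 / ((3 * INR k + 1) * (INR k + 1))) N).
  { rewrite <- sR_scal. apply sR_ext. intros i _. unfold term. rewrite !pow1.
    rewrite !plus_INR, !mult_INR. simpl (INR 3). simpl (INR 1). pose proof (pos_INR i). field. nzs. }
  rewrite E0, E1. match goal with |- ?a = ?b => change (@eq R a b) end. lra.
Qed.

Lemma S0_series : is_series (fun k : nat => 1 / ((3 * INR k + 1) * (INR k + 1))) S0.
Proof.
  change (is_lim_seq (sum_n (fun k : nat => 1 / ((3 * INR k + 1) * (INR k + 1)))) S0).
  apply (is_lim_seq_le_le (fun N => S0 - 3 / 2 * / INR (3 * S N + 1)) _ (fun _ => S0)).
  - intros N. rewrite sum_n_sR, partial_S0, gg_diff. pose proof (hh_bounds (S N)). lra.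
  - assert (H1 : is_lim_seq (fun n => INR (3 * S n + 1)) p_infty).
    { apply (is_lim_seq_le_p_loc (fun n => INR n)). exists O. intros n _. apply le_INR. lia.
      apply is_lim_seq_INR. }
    pose proof (is_lim_seq_inv _ _ H1 ltac:(discriminate)) as H2. simpl in H2.
    assert (H3 : is_lim_seq (fun n => 3 / 2 * / INR (3 * S n + 1)) (3/2 * 0)) by exact (is_lim_seq_scal_l _ (3/2) _ H2).
    assert (H4 := is_lim_seq_minus' _ _ _ _ (is_lim_seq_const S0) H3).
    replace (S0 - 3 / 2 * 0) with S0 in H4 by ring. exact H4.
  - apply is_lim_seq_const.
Qed.

Definition ra_1 (n k : nat) : R := 1 * ((INR n + (5/3)) * (INR n + 1)) / ((INR n + INR k + 2) * (INR n + 2)).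
Definition r1_1 (n k : nat) : R := 1 * ra_1 n k.
Definition r2_1 (n k : nat) : R := ((INR k + (1/3)) * (INR k + 1)) / ((INR k + (4/3)) * (INR n + INR k + 2)).
Definition P_1 (n : nat) : R := (18 + 18 * INR n ^ 1).
Definition Q_1 (n k : nat) : R := (6 + 18 * INR k ^ 1).

Lemma c_1 : forall n k, r1_1 n k * r2_1 (S n) k = r2_1 n k * r1_1 n (S k).
Proof. intros n k. unfold r1_1, ra_1, r2_1. rewrite ?S_INR. pose proof (pos_INR n). pose proof (pos_INR k). field. nzs. Qed.

Lemma b_1 : forall n k, r1_1 n k * P_1 (S n) - P_1 n = r2_1 n k * Q_1 n (S k) - Q_1 n k.
Proof. intros n k. unfold r1_1, ra_1, r2_1, P_1, Q_1. rewrite ?S_INR. pose proof (pos_INR n). pose proof (pos_INR k). field. nzs. Qed.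

Lemma r20_1 : forall k, r2_1 O k = (3 * INR k + 1) * (INR k + 1) / ((3 * INR (S k) + 1) * (INR (S k) + 1)).
Proof. intros k. unfold r2_1. rewrite !S_INR. simpl (INR O). pose proof (pos_INR k). field. nzs. Qed.

Lemma Qpos_1 : forall n k, 0 < Q_1 n k.
Proof. intros n k. unfold Q_1. pose proof (pos_INR n). pose proof (pos_INR k). pos. Qed.

Lemma Ppos_1 : forall n, 0 < P_1 n.
Proof. intros n. unfold P_1. pose proof (pos_INR n). pos. Qed.

Lemma r2pos_1 : forall n k, 0 < r2_1 n k.
Proof. intros n k. unfold r2_1. pose proof (pos_INR n). pose proof (pos_INR k). pos. Qed.

Lemma rapos_1 : forall n k, 0 <= ra_1 n k.
Proof. intros n k. apply Rlt_le. unfold ra_1. pose proof (pos_INR n). pose proof (pos_INR k). pos. Qed.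

Lemma rat_1 : forall n k, (S n < k)%nat -> Rabs (r1_1 n k * Q_1 (S n) k) <= 3/4 * Q_1 n k.
Proof.
  intros n k H. unfold r1_1. rewrite Rmult_assoc, Rabs_mult.
  replace (Rabs 1) with 1 by (unfold Rabs; destruct Rcase_abs; lra). rewrite Rmult_1_l.
  rewrite Rabs_pos_eq by (apply Rmult_le_pos; [apply rapos_1 | apply Rlt_le, Qpos_1]).
  assert (Hk : INR k = INR n + 2 + INR (k - S (S n))).
  { replace k with (S (S n) + (k - S (S n)))%nat at 1 by lia. rewrite plus_INR, !S_INR. ring. }
  set (z := INR (k - S (S n))) in *. pose proof (pos_INR n). assert (0 <= z) by apply pos_INR.
  assert (Hd : 0 < (2 * INR n + z + 4) * (INR n + 2)) by pos.
  assert (HD : 0 <= (182 + 141 * z ^ 1 + 27 * z ^ 2 + 218 * INR n ^ 1 + (237/2) * INR n ^ 1 * z ^ 1 + (27/2) * INR n ^ 1 * z ^ 2 + 81 * INR n ^ 2 + (45/2) * INR n ^ 2 * z ^ 1 + 9 * INR n ^ 3)) by pos0.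
  assert (E : ra_1 n k * Q_1 (S n) k = 3/4 * Q_1 n k - (182 + 141 * z ^ 1 + 27 * z ^ 2 + 218 * INR n ^ 1 + (237/2) * INR n ^ 1 * z ^ 1 + (27/2) * INR n ^ 1 * z ^ 2 + 81 * INR n ^ 2 + (45/2) * INR n ^ 2 * z ^ 1 + 9 * INR n ^ 3) / ((2 * INR n + z + 4) * (INR n + 2))).
  { unfold ra_1, Q_1. rewrite ?S_INR, Hk. field. nzs. }
  rewrite E. assert (0 <= (182 + 141 * z ^ 1 + 27 * z ^ 2 + 218 * INR n ^ 1 + (237/2) * INR n ^ 1 * z ^ 1 + (27/2) * INR n ^ 1 * z ^ 2 + 81 * INR n ^ 2 + (45/2) * INR n ^ 2 * z ^ 1 + 9 * INR n ^ 3) / ((2 * INR n + z + 4) * (INR n + 2))) by (apply Rdiv_le_0_compat; auto).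
  lra.
Qed.

Lemma Wnz_1 : forall n, P_1 n + r2_1 n n * Q_1 n (S n) <> 0.
Proof. intros n. apply Rgt_not_eq. pose proof (Ppos_1 n). pose proof (r2pos_1 n n). pose proof (Qpos_1 n (S n)).
  pose proof (Rmult_lt_0_compat _ _ H0 H1). lra. Qed.

Lemma step_1 : forall n, (fun n : nat =>
    (9 * INR n + 7) / ((INR n + 1) * (3 * INR n + 1))
    * (poch (5/3) n / poch (3/2) n) * / 4 ^ n) (S n) * (P_1 n + r2_1 n n * Q_1 n (S n))
  = (fun n : nat =>
    (9 * INR n + 7) / ((INR n + 1) * (3 * INR n + 1))
    * (poch (5/3) n / poch (3/2) n) * / 4 ^ n) n * (r1_1 n n * r2_1 (S n) n * (P_1 (S n) + r2_1 (S n) (S n) * Q_1 (S n) (S (S n)))).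
Proof. intros n. cbv beta. unfold r1_1, ra_1, r2_1, P_1, Q_1. rewrite !S_INR. simpl poch. repeat rewrite <- tech_pow_Rmult. pose proof (pos_INR n).
  field. nzs. Qed.

Lemma base_1 : P_1 O + r2_1 O O * Q_1 O (S O) = 3 * (fun n : nat =>
    (9 * INR n + 7) / ((INR n + 1) * (3 * INR n + 1))
    * (poch (5/3) n / poch (3/2) n) * / 4 ^ n) O.
Proof. cbv beta. unfold r2_1, P_1, Q_1. simpl. field. Qed.

Lemma G0_1 : is_lim_seq (fun K => Kg r1_1 r2_1 O K * Q_1 O K) 0.
Proof.
  apply (is_lim_seq_ext (fun K => 1 / ((3 * INR K + 1) * (INR K + 1)) * Q_1 O K)).
  intros K. rewrite (Kg0 r1_1 r2_1 r20_1). reflexivity.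
  apply G0lim with (a := 6) (b := 18); try lra.
  intros K. unfold Q_1. simpl (INR O). ring.
Qed.

Lemma ser_1 (S0 : R) : is_series (fun k : nat => 1 / ((3 * INR k + 1) * (INR k + 1))) S0 ->
  is_series (fun n : nat =>
    (9 * INR n + 7) / ((INR n + 1) * (3 * INR n + 1))
    * (poch (5/3) n / poch (3/2) n) * / 4 ^ n) (6 * S0).
Proof.
  intros HS. replace (6 * S0) with (18 / 3 * S0) by field.
  apply (wz_series (fun n k => Kg r1_1 r2_1 n k * P_1 n) (fun n k => Kg r1_1 r2_1 n k * Q_1 n k)
    (fun n : nat =>
    (9 * INR n + 7) / ((INR n + 1) * (3 * INR n + 1))
    * (poch (5/3) n / poch (3/2) n) * / 4 ^ n) (fun k : nat => 1 / ((3 * INR k + 1) * (INR k + 1))) 3 18 S0 (3/4)); try lra.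
  - intros n k _. apply wz_gen; [apply c_1 | apply b_1].
  - intros k. rewrite (Kg0 r1_1 r2_1 r20_1). unfold P_1. simpl (INR O). field. pose proof (pos_INR k). nzs.
  - intros n. apply (diag_gen r1_1 r2_1 P_1 Q_1 (fun n : nat =>
    (9 * INR n + 7) / ((INR n + 1) * (3 * INR n + 1))
    * (poch (5/3) n / poch (3/2) n) * / 4 ^ n) 3); [apply c_1 | apply base_1 | apply Wnz_1 | apply step_1].
  - intros n k H. apply (ratio_gen _ _ _ _ c_1 Qpos_1 rat_1); auto.
  - apply G0_1.
  - auto.
Qed.


Definition ra_2 (n k : nat) : R := (INR n + (1/3)) / (INR n + INR k + (4/3)).
Definition r1_2 (n k : nat) : R := 1 * ra_2 n k.
Definition r2_2 (n k : nat) : R := ((INR k + (1/3)) * (INR k + 1)) / ((INR n + INR k + (4/3)) * (INR k + 2)).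
Definition P_2 (n : nat) : R := 1.
Definition Q_2 (n k : nat) : R := (INR k + 1) / (INR n + 1).

Lemma c_2 : forall n k, r1_2 n k * r2_2 (S n) k = r2_2 n k * r1_2 n (S k).
Proof. intros n k. unfold r1_2, ra_2, r2_2. rewrite ?S_INR. pose proof (pos_INR n). pose proof (pos_INR k). field. nzs. Qed.

Lemma b_2 : forall n k, r1_2 n k * P_2 (S n) - P_2 n = r2_2 n k * Q_2 n (S k) - Q_2 n k.
Proof. intros n k. unfold r1_2, ra_2, r2_2, P_2, Q_2. rewrite ?S_INR. pose proof (pos_INR n). pose proof (pos_INR k). field. nzs. Qed.

Lemma r20_2 : forall k, r2_2 O k = (3 * INR k + 1) * (INR k + 1) / ((3 * INR (S k) + 1) * (INR (S k) + 1)).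
Proof. intros k. unfold r2_2. rewrite !S_INR. simpl (INR O). pose proof (pos_INR k). field. nzs. Qed.

Lemma Qpos_2 : forall n k, 0 < Q_2 n k.
Proof. intros n k. unfold Q_2. pose proof (pos_INR n). pose proof (pos_INR k). pos. Qed.

Lemma r2pos_2 : forall n k, 0 < r2_2 n k.
Proof. intros n k. unfold r2_2. pose proof (pos_INR n). pose proof (pos_INR k). pos. Qed.

Lemma rapos_2 : forall n k, 0 <= ra_2 n k.
Proof. intros n k. apply Rlt_le. unfold ra_2. pose proof (pos_INR n). pose proof (pos_INR k). pos. Qed.

Lemma rat_2 : forall n k, (S n < k)%nat -> Rabs (r1_2 n k * Q_2 (S n) k) <= 3/4 * Q_2 n k.
Proof.
  intros n k H. unfold r1_2. rewrite Rmult_assoc, Rabs_mult.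
  replace (Rabs 1) with 1 by (unfold Rabs; destruct Rcase_abs; lra). rewrite Rmult_1_l.
  rewrite Rabs_pos_eq by (apply Rmult_le_pos; [apply rapos_2 | apply Rlt_le, Qpos_2]).
  assert (Hk : INR k = INR n + 2 + INR (k - S (S n))).
  { replace k with (S (S n) + (k - S (S n)))%nat at 1 by lia. rewrite plus_INR, !S_INR. ring. }
  set (z := INR (k - S (S n))) in *. pose proof (pos_INR n). assert (0 <= z) by apply pos_INR.
  assert (Hd : 0 < (INR n + 1) * (2 * INR n + z + 10/3) * (INR n + 2)) by pos.
  assert (HD : 0 <= (14 + (55/6) * z ^ 1 + (3/2) * z ^ 2 + (103/6) * INR n ^ 1 + (95/12) * INR n ^ 1 * z ^ 1 + (3/4) * INR n ^ 1 * z ^ 2 + (17/3) * INR n ^ 2 + (5/4) * INR n ^ 2 * z ^ 1 + (1/2) * INR n ^ 3)) by pos0.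
  assert (E : ra_2 n k * Q_2 (S n) k = 3/4 * Q_2 n k - (14 + (55/6) * z ^ 1 + (3/2) * z ^ 2 + (103/6) * INR n ^ 1 + (95/12) * INR n ^ 1 * z ^ 1 + (3/4) * INR n ^ 1 * z ^ 2 + (17/3) * INR n ^ 2 + (5/4) * INR n ^ 2 * z ^ 1 + (1/2) * INR n ^ 3) / ((INR n + 1) * (2 * INR n + z + 10/3) * (INR n + 2))).
  { unfold ra_2, Q_2. rewrite ?S_INR, Hk. field. nzs. }
  rewrite E. assert (0 <= (14 + (55/6) * z ^ 1 + (3/2) * z ^ 2 + (103/6) * INR n ^ 1 + (95/12) * INR n ^ 1 * z ^ 1 + (3/4) * INR n ^ 1 * z ^ 2 + (17/3) * INR n ^ 2 + (5/4) * INR n ^ 2 * z ^ 1 + (1/2) * INR n ^ 3) / ((INR n + 1) * (2 * INR n + z + 10/3) * (INR n + 2))) by (apply Rdiv_le_0_compat; auto).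
  lra.
Qed.

Lemma Wnz_2 : forall n, P_2 n + r2_2 n n * Q_2 n (S n) <> 0.
Proof. intros n. apply Rgt_not_eq. unfold P_2. pose proof (r2pos_2 n n). pose proof (Qpos_2 n (S n)).
  pose proof (Rmult_lt_0_compat _ _ H H0). lra. Qed.

Definition T2 := (fun n : nat =>
    (9 * INR n + 5) / (INR n + 1)
    * (poch (1/3) n ^ 2 / (poch (5/3) n * poch (7/6) n)) * / 4 ^ n).

Lemma step_2 : forall n, T2 (S n) * (P_2 n + r2_2 n n * Q_2 n (S n))
  = T2 n * (r1_2 n n * r2_2 (S n) n * (P_2 (S n) + r2_2 (S n) (S n) * Q_2 (S n) (S (S n)))).
Proof. intros n. unfold T2. cbv beta. unfold r1_2, ra_2, r2_2, P_2, Q_2. rewrite !S_INR. simpl poch. repeat rewrite <- tech_pow_Rmult. pose proof (pos_INR n).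
  field. nzs. Qed.

Lemma base_2 : P_2 O + r2_2 O O * Q_2 O (S O) = (1/4) * T2 O.
Proof. unfold T2. cbv beta. unfold r2_2, P_2, Q_2. simpl. field. Qed.

Lemma G0_2 : is_lim_seq (fun K => Kg r1_2 r2_2 O K * Q_2 O K) 0.
Proof.
  apply (is_lim_seq_ext (fun K => 1 / ((3 * INR K + 1) * (INR K + 1)) * Q_2 O K)).
  intros K. rewrite (Kg0 r1_2 r2_2 r20_2). reflexivity.
  apply G0lim with (a := 1) (b := 1); try lra.
  intros K. unfold Q_2. simpl (INR O). field.
Qed.

Lemma ser_2 (S0 : R) : is_series (fun k : nat => 1 / ((3 * INR k + 1) * (INR k + 1))) S0 ->
  is_series (fun n : nat =>
    (9 * INR n + 5) / (INR n + 1)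
    * (poch (1/3) n ^ 2 / (poch (5/3) n * poch (7/6) n)) * / 4 ^ n) (4 * S0).
Proof.
  intros HS. replace (4 * S0) with (1 / (1/4) * S0) by field.
  apply (wz_series (fun n k => Kg r1_2 r2_2 n k * P_2 n) (fun n k => Kg r1_2 r2_2 n k * Q_2 n k)
    T2 (fun k : nat => 1 / ((3 * INR k + 1) * (INR k + 1))) (1/4) 1 S0 (3/4)); try lra.
  - intros n k _. apply wz_gen; [apply c_2 | apply b_2].
  - intros k. rewrite (Kg0 r1_2 r2_2 r20_2). unfold P_2. field. pose proof (pos_INR k). nzs.
  - intros n. apply (diag_gen r1_2 r2_2 P_2 Q_2 T2 (1/4)); [apply c_2 | apply base_2 | apply Wnz_2 | apply step_2].
  - intros n k H. apply (ratio_gen _ _ _ _ c_2 Qpos_2 rat_2); auto.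
  - apply G0_2.
  - auto.
Qed.

Definition ra_3 (n k : nat) : R := (1/4) * ((INR n + (1/3)) * (INR n + (2/3)) * (INR n + 1)) / ((INR n + INR k + (4/3)) * (INR n + INR k + 2) * (INR n + (3/2))).
Definition r1_3 (n k : nat) : R := 1 * ra_3 n k.
Definition r2_3 (n k : nat) : R := ((INR k + (1/3)) * (INR k + 1)) / ((INR n + INR k + (4/3)) * (INR n + INR k + 2)).
Definition P_3 (n : nat) : R := (48 + 168 * INR n ^ 1 + 144 * INR n ^ 2).
Definition Q_3 (n k : nat) : R := (56 + 48 * INR k ^ 1 + 156 * INR n ^ 1 + 72 * INR n ^ 1 * INR k ^ 1 + 108 * INR n ^ 2).

Lemma c_3 : forall n k, r1_3 n k * r2_3 (S n) k = r2_3 n k * r1_3 n (S k).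
Proof. intros n k. unfold r1_3, ra_3, r2_3. rewrite ?S_INR. pose proof (pos_INR n). pose proof (pos_INR k). field. nzs. Qed.

Lemma b_3 : forall n k, r1_3 n k * P_3 (S n) - P_3 n = r2_3 n k * Q_3 n (S k) - Q_3 n k.
Proof. intros n k. unfold r1_3, ra_3, r2_3, P_3, Q_3. rewrite ?S_INR. pose proof (pos_INR n). pose proof (pos_INR k). field. nzs. Qed.

Lemma r20_3 : forall k, r2_3 O k = (3 * INR k + 1) * (INR k + 1) / ((3 * INR (S k) + 1) * (INR (S k) + 1)).
Proof. intros k. unfold r2_3. rewrite !S_INR. simpl (INR O). pose proof (pos_INR k). field. nzs. Qed.

Lemma Qpos_3 : forall n k, 0 < Q_3 n k.
Proof. intros n k. unfold Q_3. pose proof (pos_INR n). pose proof (pos_INR k). pos. Qed.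

Lemma Ppos_3 : forall n, 0 < P_3 n.
Proof. intros n. unfold P_3. pose proof (pos_INR n). pos. Qed.

Lemma r2pos_3 : forall n k, 0 < r2_3 n k.
Proof. intros n k. unfold r2_3. pose proof (pos_INR n). pose proof (pos_INR k). pos. Qed.

Lemma rapos_3 : forall n k, 0 <= ra_3 n k.
Proof. intros n k. apply Rlt_le. unfold ra_3. pose proof (pos_INR n). pose proof (pos_INR k). pos. Qed.

Lemma rat_3 : forall n k, (S n < k)%nat -> Rabs (r1_3 n k * Q_3 (S n) k) <= 3/4 * Q_3 n k.
Proof.
  intros n k H. unfold r1_3. rewrite Rmult_assoc, Rabs_mult.
  replace (Rabs 1) with 1 by (unfold Rabs; destruct Rcase_abs; lra). rewrite Rmult_1_l.
  rewrite Rabs_pos_eq by (apply Rmult_le_pos; [apply rapos_3 | apply Rlt_le, Qpos_3]).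
  assert (Hk : INR k = INR n + 2 + INR (k - S (S n))).
  { replace k with (S (S n) + (k - S (S n)))%nat at 1 by lia. rewrite plus_INR, !S_INR. ring. }
  set (z := INR (k - S (S n))) in *. pose proof (pos_INR n). assert (0 <= z) by apply pos_INR.
  assert (Hd : 0 < (2 * INR n + z + (10/3)) * (2 * INR n + z + 4) * (INR n + (3/2))) by pos.
  assert (HD : 0 <= ((20240/9) + (5902/3) * z ^ 1 + 567 * z ^ 2 + 54 * z ^ 3 + (81374/9) * INR n ^ 1 + (20107/3) * INR n ^ 1 * z ^ 1 + (3159/2) * INR n ^ 1 * z ^ 2 + 117 * INR n ^ 1 * z ^ 3 + (41381/3) * INR n ^ 2 + 7991 * INR n ^ 2 * z ^ 1 + (2655/2) * INR n ^ 2 * z ^ 2 + 54 * INR n ^ 2 * z ^ 3 + 10107 * INR n ^ 3 + 4038 * INR n ^ 3 * z ^ 1 + 351 * INR n ^ 3 * z ^ 2 + 3585 * INR n ^ 4 + 738 * INR n ^ 4 * z ^ 1 + 495 * INR n ^ 5)) by pos0.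
  assert (E : ra_3 n k * Q_3 (S n) k = 3/4 * Q_3 n k - ((20240/9) + (5902/3) * z ^ 1 + 567 * z ^ 2 + 54 * z ^ 3 + (81374/9) * INR n ^ 1 + (20107/3) * INR n ^ 1 * z ^ 1 + (3159/2) * INR n ^ 1 * z ^ 2 + 117 * INR n ^ 1 * z ^ 3 + (41381/3) * INR n ^ 2 + 7991 * INR n ^ 2 * z ^ 1 + (2655/2) * INR n ^ 2 * z ^ 2 + 54 * INR n ^ 2 * z ^ 3 + 10107 * INR n ^ 3 + 4038 * INR n ^ 3 * z ^ 1 + 351 * INR n ^ 3 * z ^ 2 + 3585 * INR n ^ 4 + 738 * INR n ^ 4 * z ^ 1 + 495 * INR n ^ 5) / ((2 * INR n + z + (10/3)) * (2 * INR n + z + 4) * (INR n + (3/2)))).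
  { unfold ra_3, Q_3. rewrite ?S_INR, Hk. field. nzs. }
  rewrite E. assert (0 <= ((20240/9) + (5902/3) * z ^ 1 + 567 * z ^ 2 + 54 * z ^ 3 + (81374/9) * INR n ^ 1 + (20107/3) * INR n ^ 1 * z ^ 1 + (3159/2) * INR n ^ 1 * z ^ 2 + 117 * INR n ^ 1 * z ^ 3 + (41381/3) * INR n ^ 2 + 7991 * INR n ^ 2 * z ^ 1 + (2655/2) * INR n ^ 2 * z ^ 2 + 54 * INR n ^ 2 * z ^ 3 + 10107 * INR n ^ 3 + 4038 * INR n ^ 3 * z ^ 1 + 351 * INR n ^ 3 * z ^ 2 + 3585 * INR n ^ 4 + 738 * INR n ^ 4 * z ^ 1 + 495 * INR n ^ 5) / ((2 * INR n + z + (10/3)) * (2 * INR n + z + 4) * (INR n + (3/2)))) by (apply Rdiv_le_0_compat; auto).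
  lra.
Qed.

Lemma Wnz_3 : forall n, P_3 n + r2_3 n n * Q_3 n (S n) <> 0.
Proof. intros n. apply Rgt_not_eq. pose proof (Ppos_3 n). pose proof (r2pos_3 n n). pose proof (Qpos_3 n (S n)).
  pose proof (Rmult_lt_0_compat _ _ H0 H1). lra. Qed.

Lemma step_3 : forall n, (fun n : nat =>
    (189 * INR n ^ 2 + 222 * INR n + 61)
    * (poch (1/3) n ^ 2 * poch 1 n / (poch (7/6) n * poch (3/2) n ^ 2))
    * / 64 ^ n) (S n) * (P_3 n + r2_3 n n * Q_3 n (S n))
  = (fun n : nat =>
    (189 * INR n ^ 2 + 222 * INR n + 61)
    * (poch (1/3) n ^ 2 * poch 1 n / (poch (7/6) n * poch (3/2) n ^ 2))
    * / 64 ^ n) n * (r1_3 n n * r2_3 (S n) n * (P_3 (S n) + r2_3 (S n) (S n) * Q_3 (S n) (S (S n)))).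
Proof. intros n. cbv beta. unfold r1_3, ra_3, r2_3, P_3, Q_3. rewrite !S_INR. simpl poch. repeat rewrite <- tech_pow_Rmult. pose proof (pos_INR n).
  field. nzs. Qed.

Lemma base_3 : P_3 O + r2_3 O O * Q_3 O (S O) = 1 * (fun n : nat =>
    (189 * INR n ^ 2 + 222 * INR n + 61)
    * (poch (1/3) n ^ 2 * poch 1 n / (poch (7/6) n * poch (3/2) n ^ 2))
    * / 64 ^ n) O.
Proof. cbv beta. unfold r2_3, P_3, Q_3. simpl. field. Qed.

Lemma G0_3 : is_lim_seq (fun K => Kg r1_3 r2_3 O K * Q_3 O K) 0.
Proof.
  apply (is_lim_seq_ext (fun K => 1 / ((3 * INR K + 1) * (INR K + 1)) * Q_3 O K)).
  intros K. rewrite (Kg0 r1_3 r2_3 r20_3). reflexivity.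
  apply G0lim with (a := 56) (b := 48); try lra.
  intros K. unfold Q_3. simpl (INR O). ring.
Qed.

Lemma ser_3 (S0 : R) : is_series (fun k : nat => 1 / ((3 * INR k + 1) * (INR k + 1))) S0 ->
  is_series (fun n : nat =>
    (189 * INR n ^ 2 + 222 * INR n + 61)
    * (poch (1/3) n ^ 2 * poch 1 n / (poch (7/6) n * poch (3/2) n ^ 2))
    * / 64 ^ n) (48 * S0).
Proof.
  intros HS. replace (48 * S0) with (48 / 1 * S0) by field.
  apply (wz_series (fun n k => Kg r1_3 r2_3 n k * P_3 n) (fun n k => Kg r1_3 r2_3 n k * Q_3 n k)
    (fun n : nat =>
    (189 * INR n ^ 2 + 222 * INR n + 61)
    * (poch (1/3) n ^ 2 * poch 1 n / (poch (7/6) n * poch (3/2) n ^ 2))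
    * / 64 ^ n) (fun k : nat => 1 / ((3 * INR k + 1) * (INR k + 1))) 1 48 S0 (3/4)); try lra.
  - intros n k _. apply wz_gen; [apply c_3 | apply b_3].
  - intros k. rewrite (Kg0 r1_3 r2_3 r20_3). unfold P_3. simpl (INR O). field. pose proof (pos_INR k). nzs.
  - intros n. apply (diag_gen r1_3 r2_3 P_3 Q_3 (fun n : nat =>
    (189 * INR n ^ 2 + 222 * INR n + 61)
    * (poch (1/3) n ^ 2 * poch 1 n / (poch (7/6) n * poch (3/2) n ^ 2))
    * / 64 ^ n) 1); [apply c_3 | apply base_3 | apply Wnz_3 | apply step_3].
  - intros n k H. apply (ratio_gen _ _ _ _ c_3 Qpos_3 rat_3); auto.
  - apply G0_3.
  - auto.
Qed.


Definition ra_4 (n k : nat) : R := 1 * ((INR n + INR k + 1) * (INR n + (2/3)) * (INR n + 1)) / ((INR n + INR k + (4/3)) * (INR n + INR k + 2) * (INR n + 2)).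
Definition r1_4 (n k : nat) : R := (-1) * ra_4 n k.
Definition r2_4 (n k : nat) : R := ((INR k + (1/3)) * (INR n + INR k + 1)) / ((INR n + INR k + (4/3)) * (INR n + INR k + 2)).
Definition P_4 (n : nat) : R := (16 + 40 * INR n ^ 1 + 24 * INR n ^ 2).
Definition Q_4 (n k : nat) : R := (32 + 16 * INR k ^ 1 + 80 * INR n ^ 1 + 24 * INR n ^ 1 * INR k ^ 1 + 48 * INR n ^ 2).

Lemma c_4 : forall n k, r1_4 n k * r2_4 (S n) k = r2_4 n k * r1_4 n (S k).
Proof. intros n k. unfold r1_4, ra_4, r2_4. rewrite ?S_INR. pose proof (pos_INR n). pose proof (pos_INR k). field. nzs. Qed.

Lemma b_4 : forall n k, r1_4 n k * P_4 (S n) - P_4 n = r2_4 n k * Q_4 n (S k) - Q_4 n k.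
Proof. intros n k. unfold r1_4, ra_4, r2_4, P_4, Q_4. rewrite ?S_INR. pose proof (pos_INR n). pose proof (pos_INR k). field. nzs. Qed.

Lemma r20_4 : forall k, r2_4 O k = (3 * INR k + 1) * (INR k + 1) / ((3 * INR (S k) + 1) * (INR (S k) + 1)).
Proof. intros k. unfold r2_4. rewrite !S_INR. simpl (INR O). pose proof (pos_INR k). field. nzs. Qed.

Lemma Qpos_4 : forall n k, 0 < Q_4 n k.
Proof. intros n k. unfold Q_4. pose proof (pos_INR n). pose proof (pos_INR k). pos. Qed.

Lemma Ppos_4 : forall n, 0 < P_4 n.
Proof. intros n. unfold P_4. pose proof (pos_INR n). pos. Qed.

Lemma r2pos_4 : forall n k, 0 < r2_4 n k.
Proof. intros n k. unfold r2_4. pose proof (pos_INR n). pose proof (pos_INR k). pos. Qed.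

Lemma rapos_4 : forall n k, 0 <= ra_4 n k.
Proof. intros n k. apply Rlt_le. unfold ra_4. pose proof (pos_INR n). pose proof (pos_INR k). pos. Qed.

Lemma rat_4 : forall n k, (S n < k)%nat -> Rabs (r1_4 n k * Q_4 (S n) k) <= 3/4 * Q_4 n k.
Proof.
  intros n k H. unfold r1_4. rewrite Rmult_assoc, Rabs_mult.
  replace (Rabs (-1)) with 1 by (unfold Rabs; destruct Rcase_abs; lra). rewrite Rmult_1_l.
  rewrite Rabs_pos_eq by (apply Rmult_le_pos; [apply rapos_4 | apply Rlt_le, Qpos_4]).
  assert (Hk : INR k = INR n + 2 + INR (k - S (S n))).
  { replace k with (S (S n) + (k - S (S n)))%nat at 1 by lia. rewrite plus_INR, !S_INR. ring. }
  set (z := INR (k - S (S n))) in *. pose proof (pos_INR n). assert (0 <= z) by apply pos_INR.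
  assert (Hd : 0 < (2 * INR n + z + (10/3)) * (2 * INR n + z + 4) * (INR n + 2)) by pos.
  assert (HD : 0 <= (800 + 784 * z ^ 1 + (736/3) * z ^ 2 + 24 * z ^ 3 + 2880 * INR n ^ 1 + (7304/3) * INR n ^ 1 * z ^ 1 + (1888/3) * INR n ^ 1 * z ^ 2 + 48 * INR n ^ 1 * z ^ 3 + 3800 * INR n ^ 2 + (7640/3) * INR n ^ 2 * z ^ 1 + 460 * INR n ^ 2 * z ^ 2 + 18 * INR n ^ 2 * z ^ 3 + 2336 * INR n ^ 3 + 1100 * INR n ^ 3 * z ^ 1 + 102 * INR n ^ 3 * z ^ 2 + 672 * INR n ^ 4 + 168 * INR n ^ 4 * z ^ 1 + 72 * INR n ^ 5)) by pos0.
  assert (E : ra_4 n k * Q_4 (S n) k = 3/4 * Q_4 n k - (800 + 784 * z ^ 1 + (736/3) * z ^ 2 + 24 * z ^ 3 + 2880 * INR n ^ 1 + (7304/3) * INR n ^ 1 * z ^ 1 + (1888/3) * INR n ^ 1 * z ^ 2 + 48 * INR n ^ 1 * z ^ 3 + 3800 * INR n ^ 2 + (7640/3) * INR n ^ 2 * z ^ 1 + 460 * INR n ^ 2 * z ^ 2 + 18 * INR n ^ 2 * z ^ 3 + 2336 * INR n ^ 3 + 1100 * INR n ^ 3 * z ^ 1 + 102 * INR n ^ 3 * z ^ 2 + 672 * INR n ^ 4 + 168 * INR n ^ 4 * z ^ 1 + 72 * INR n ^ 5) / ((2 * INR n + z + (10/3)) * (2 * INR n + z + 4) * (INR n + 2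))).
  { unfold ra_4, Q_4. rewrite ?S_INR, Hk. field. nzs. }
  rewrite E. assert (0 <= (800 + 784 * z ^ 1 + (736/3) * z ^ 2 + 24 * z ^ 3 + 2880 * INR n ^ 1 + (7304/3) * INR n ^ 1 * z ^ 1 + (1888/3) * INR n ^ 1 * z ^ 2 + 48 * INR n ^ 1 * z ^ 3 + 3800 * INR n ^ 2 + (7640/3) * INR n ^ 2 * z ^ 1 + 460 * INR n ^ 2 * z ^ 2 + 18 * INR n ^ 2 * z ^ 3 + 2336 * INR n ^ 3 + 1100 * INR n ^ 3 * z ^ 1 + 102 * INR n ^ 3 * z ^ 2 + 672 * INR n ^ 4 + 168 * INR n ^ 4 * z ^ 1 + 72 * INR n ^ 5) / ((2 * INR n + z + (10/3)) * (2 * INR n + z + 4) * (INR n + 2))) by (apply Rdiv_le_0_compat; auto).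
  lra.
Qed.

Lemma Wnz_4 : forall n, P_4 n + r2_4 n n * Q_4 n (S n) <> 0.
Proof. intros n. apply Rgt_not_eq. pose proof (Ppos_4 n). pose proof (r2pos_4 n n). pose proof (Qpos_4 n (S n)).
  pose proof (Rmult_lt_0_compat _ _ H0 H1). lra. Qed.

Lemma step_4 : forall n, (fun n : nat =>
    (30 * INR n ^ 2 + 35 * INR n + 11) / ((1 + 2 * INR n) * (1 + INR n))
    * (poch (1/3) n / poch (7/6) n) * / (-4) ^ n) (S n) * (P_4 n + r2_4 n n * Q_4 n (S n))
  = (fun n : nat =>
    (30 * INR n ^ 2 + 35 * INR n + 11) / ((1 + 2 * INR n) * (1 + INR n))
    * (poch (1/3) n / poch (7/6) n) * / (-4) ^ n) n * (r1_4 n n * r2_4 (S n) n * (P_4 (S n) + r2_4 (S n) (S n) * Q_4 (S n) (S (S n)))).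
Proof. intros n. cbv beta. unfold r1_4, ra_4, r2_4, P_4, Q_4. rewrite !S_INR. simpl poch. repeat rewrite <- tech_pow_Rmult. pose proof (pos_INR n).
  field. nzs. Qed.

Lemma base_4 : P_4 O + r2_4 O O * Q_4 O (S O) = 2 * (fun n : nat =>
    (30 * INR n ^ 2 + 35 * INR n + 11) / ((1 + 2 * INR n) * (1 + INR n))
    * (poch (1/3) n / poch (7/6) n) * / (-4) ^ n) O.
Proof. cbv beta. unfold r2_4, P_4, Q_4. simpl. field. Qed.

Lemma G0_4 : is_lim_seq (fun K => Kg r1_4 r2_4 O K * Q_4 O K) 0.
Proof.
  apply (is_lim_seq_ext (fun K => 1 / ((3 * INR K + 1) * (INR K + 1)) * Q_4 O K)).
  intros K. rewrite (Kg0 r1_4 r2_4 r20_4). reflexivity.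
  apply G0lim with (a := 32) (b := 16); try lra.
  intros K. unfold Q_4. simpl (INR O). ring.
Qed.

Lemma ser_4 (S0 : R) : is_series (fun k : nat => 1 / ((3 * INR k + 1) * (INR k + 1))) S0 ->
  is_series (fun n : nat =>
    (30 * INR n ^ 2 + 35 * INR n + 11) / ((1 + 2 * INR n) * (1 + INR n))
    * (poch (1/3) n / poch (7/6) n) * / (-4) ^ n) (8 * S0).
Proof.
  intros HS. replace (8 * S0) with (16 / 2 * S0) by field.
  apply (wz_series (fun n k => Kg r1_4 r2_4 n k * P_4 n) (fun n k => Kg r1_4 r2_4 n k * Q_4 n k)
    (fun n : nat =>
    (30 * INR n ^ 2 + 35 * INR n + 11) / ((1 + 2 * INR n) * (1 + INR n))
    * (poch (1/3) n / poch (7/6) n) * / (-4) ^ n) (fun k : nat => 1 / ((3 * INR k + 1) * (INR k + 1))) 2 16 S0 (3/4)); try lra.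
  - intros n k _. apply wz_gen; [apply c_4 | apply b_4].
  - intros k. rewrite (Kg0 r1_4 r2_4 r20_4). unfold P_4. simpl (INR O). field. pose proof (pos_INR k). nzs.
  - intros n. apply (diag_gen r1_4 r2_4 P_4 Q_4 (fun n : nat =>
    (30 * INR n ^ 2 + 35 * INR n + 11) / ((1 + 2 * INR n) * (1 + INR n))
    * (poch (1/3) n / poch (7/6) n) * / (-4) ^ n) 2); [apply c_4 | apply base_4 | apply Wnz_4 | apply step_4].
  - intros n k H. apply (ratio_gen _ _ _ _ c_4 Qpos_4 rat_4); auto.
  - apply G0_4.
  - auto.
Qed.


Definition ra_5 (n k : nat) : R := 1 * ((INR n + INR k + (1/3)) * (INR n + (1/3)) * (INR n + 1) * (INR n + (2/3))) / ((INR n + INR k + (4/3)) * (INR n + INR k + 2) * (INR n + (5/3)) * (INR n + 2)).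
Definition r1_5 (n k : nat) : R := (-1) * ra_5 n k.
Definition r2_5 (n k : nat) : R := ((INR n + INR k + (1/3)) * (INR k + 1)) / ((INR n + INR k + (4/3)) * (INR n + INR k + 2)).
Definition P_5 (n : nat) : R := (432 + 1080 * INR n ^ 1 + 648 * INR n ^ 2).
Definition Q_5 (n k : nat) : R := (576 + 432 * INR k ^ 1 + 1728 * INR n ^ 1 + 648 * INR n ^ 1 * INR k ^ 1 + 1296 * INR n ^ 2).

Lemma c_5 : forall n k, r1_5 n k * r2_5 (S n) k = r2_5 n k * r1_5 n (S k).
Proof. intros n k. unfold r1_5, ra_5, r2_5. rewrite ?S_INR. pose proof (pos_INR n). pose proof (pos_INR k). field. nzs. Qed.

Lemma b_5 : forall n k, r1_5 n k * P_5 (S n) - P_5 n = r2_5 n k * Q_5 n (S k) - Q_5 n k.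
Proof. intros n k. unfold r1_5, ra_5, r2_5, P_5, Q_5. rewrite ?S_INR. pose proof (pos_INR n). pose proof (pos_INR k). field. nzs. Qed.

Lemma r20_5 : forall k, r2_5 O k = (3 * INR k + 1) * (INR k + 1) / ((3 * INR (S k) + 1) * (INR (S k) + 1)).
Proof. intros k. unfold r2_5. rewrite !S_INR. simpl (INR O). pose proof (pos_INR k). field. nzs. Qed.

Lemma Qpos_5 : forall n k, 0 < Q_5 n k.
Proof. intros n k. unfold Q_5. pose proof (pos_INR n). pose proof (pos_INR k). pos. Qed.

Lemma Ppos_5 : forall n, 0 < P_5 n.
Proof. intros n. unfold P_5. pose proof (pos_INR n). pos. Qed.

Lemma r2pos_5 : forall n k, 0 < r2_5 n k.
Proof. intros n k. unfold r2_5. pose proof (pos_INR n). pose proof (pos_INR k). pos. Qed.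

Lemma rapos_5 : forall n k, 0 <= ra_5 n k.
Proof. intros n k. apply Rlt_le. unfold ra_5. pose proof (pos_INR n). pose proof (pos_INR k). pos. Qed.

Lemma rat_5 : forall n k, (S n < k)%nat -> Rabs (r1_5 n k * Q_5 (S n) k) <= 3/4 * Q_5 n k.
Proof.
  intros n k H. unfold r1_5. rewrite Rmult_assoc, Rabs_mult.
  replace (Rabs (-1)) with 1 by (unfold Rabs; destruct Rcase_abs; lra). rewrite Rmult_1_l.
  rewrite Rabs_pos_eq by (apply Rmult_le_pos; [apply rapos_5 | apply Rlt_le, Qpos_5]).
  assert (Hk : INR k = INR n + 2 + INR (k - S (S n))).
  { replace k with (S (S n) + (k - S (S n)))%nat at 1 by lia. rewrite plus_INR, !S_INR. ring. }
  set (z := INR (k - S (S n))) in *. pose proof (pos_INR n). assert (0 <= z) by apply pos_INR.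
  assert (Hd : 0 < (2 * INR n + z + (10/3)) * (2 * INR n + z + 4) * (INR n + (5/3)) * (INR n + 2)) by pos.
  assert (HD : 0 <= ((135040/3) + 38960 * z ^ 1 + 11280 * z ^ 2 + 1080 * z ^ 3 + (595024/3) * INR n ^ 1 + 147656 * INR n ^ 1 * z ^ 1 + 36048 * INR n ^ 1 * z ^ 2 + 2808 * INR n ^ 1 * z ^ 3 + 341080 * INR n ^ 2 + 207288 * INR n ^ 2 * z ^ 1 + 39168 * INR n ^ 2 * z ^ 2 + 2106 * INR n ^ 2 * z ^ 3 + 292248 * INR n ^ 3 + 135612 * INR n ^ 3 * z ^ 1 + 17550 * INR n ^ 3 * z ^ 2 + 486 * INR n ^ 3 * z ^ 3 + 129888 * INR n ^ 4 + 41148 * INR n ^ 4 * z ^ 1 + 2754 * INR n ^ 4 * z ^ 2 + 27432 * INR n ^ 5 + 4536 * INR n ^ 5 * z ^ 1 + 1944 * INR n ^ 6)) by pos0.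
  assert (E : ra_5 n k * Q_5 (S n) k = 3/4 * Q_5 n k - ((135040/3) + 38960 * z ^ 1 + 11280 * z ^ 2 + 1080 * z ^ 3 + (595024/3) * INR n ^ 1 + 147656 * INR n ^ 1 * z ^ 1 + 36048 * INR n ^ 1 * z ^ 2 + 2808 * INR n ^ 1 * z ^ 3 + 341080 * INR n ^ 2 + 207288 * INR n ^ 2 * z ^ 1 + 39168 * INR n ^ 2 * z ^ 2 + 2106 * INR n ^ 2 * z ^ 3 + 292248 * INR n ^ 3 + 135612 * INR n ^ 3 * z ^ 1 + 17550 * INR n ^ 3 * z ^ 2 + 486 * INR n ^ 3 * z ^ 3 + 129888 * INR n ^ 4 + 41148 * INR n ^ 4 * z ^ 1 + 2754 * INR n ^ 4 * z ^ 2 + 27432 * INR n ^ 5 + 4536 * INR n ^ 5 * z ^ 1 + 1944 * INR n ^ 6) / ((2 * INR n + z + (10/3)) * (2 * INR n + z + 4) * (INR n + (5/3)) * (INR n + 2))).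
  { unfold ra_5, Q_5. rewrite ?S_INR, Hk. field. nzs. }
  rewrite E. assert (0 <= ((135040/3) + 38960 * z ^ 1 + 11280 * z ^ 2 + 1080 * z ^ 3 + (595024/3) * INR n ^ 1 + 147656 * INR n ^ 1 * z ^ 1 + 36048 * INR n ^ 1 * z ^ 2 + 2808 * INR n ^ 1 * z ^ 3 + 341080 * INR n ^ 2 + 207288 * INR n ^ 2 * z ^ 1 + 39168 * INR n ^ 2 * z ^ 2 + 2106 * INR n ^ 2 * z ^ 3 + 292248 * INR n ^ 3 + 135612 * INR n ^ 3 * z ^ 1 + 17550 * INR n ^ 3 * z ^ 2 + 486 * INR n ^ 3 * z ^ 3 + 129888 * INR n ^ 4 + 41148 * INR n ^ 4 * z ^ 1 + 2754 * INR n ^ 4 * z ^ 2 + 27432 * INR n ^ 5 + 4536 * INR n ^ 5 * z ^ 1 + 1944 * INR n ^ 6) / ((2 * INR n + z + (10/3)) * (2 * INR n + z + 4) * (INR n + (5/3)) * (INR n + 2))) by (apply Rdiv_le_0_compat; auto).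
  lra.
Qed.

Lemma Wnz_5 : forall n, P_5 n + r2_5 n n * Q_5 n (S n) <> 0.
Proof. intros n. apply Rgt_not_eq. pose proof (Ppos_5 n). pose proof (r2pos_5 n n). pose proof (Qpos_5 n (S n)).
  pose proof (Rmult_lt_0_compat _ _ H0 H1). lra. Qed.

Lemma step_5 : forall n, (fun n : nat =>
    (90 * INR n ^ 2 + 111 * INR n + 31)
      / ((1 + 6 * INR n) * (2 + 3 * INR n) * (1 + INR n))
    * (poch (1/3) n / poch (3/2) n) * / (-4) ^ n) (S n) * (P_5 n + r2_5 n n * Q_5 n (S n))
  = (fun n : nat =>
    (90 * INR n ^ 2 + 111 * INR n + 31)
      / ((1 + 6 * INR n) * (2 + 3 * INR n) * (1 + INR n))
    * (poch (1/3) n / poch (3/2) n) * / (-4) ^ n) n * (r1_5 n n * r2_5 (S n) n * (P_5 (S n) + r2_5 (S n) (S n) * Q_5 (S n) (S (S n)))).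
Proof. intros n. cbv beta. unfold r1_5, ra_5, r2_5, P_5, Q_5. rewrite !S_INR. simpl poch. repeat rewrite <- tech_pow_Rmult. pose proof (pos_INR n).
  field. nzs. Qed.

Lemma base_5 : P_5 O + r2_5 O O * Q_5 O (S O) = 36 * (fun n : nat =>
    (90 * INR n ^ 2 + 111 * INR n + 31)
      / ((1 + 6 * INR n) * (2 + 3 * INR n) * (1 + INR n))
    * (poch (1/3) n / poch (3/2) n) * / (-4) ^ n) O.
Proof. cbv beta. unfold r2_5, P_5, Q_5. simpl. field. Qed.

Lemma G0_5 : is_lim_seq (fun K => Kg r1_5 r2_5 O K * Q_5 O K) 0.
Proof.
  apply (is_lim_seq_ext (fun K => 1 / ((3 * INR K + 1) * (INR K + 1)) * Q_5 O K)).
  intros K. rewrite (Kg0 r1_5 r2_5 r20_5). reflexivity.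
  apply G0lim with (a := 576) (b := 432); try lra.
  intros K. unfold Q_5. simpl (INR O). ring.
Qed.

Lemma ser_5 (S0 : R) : is_series (fun k : nat => 1 / ((3 * INR k + 1) * (INR k + 1))) S0 ->
  is_series (fun n : nat =>
    (90 * INR n ^ 2 + 111 * INR n + 31)
      / ((1 + 6 * INR n) * (2 + 3 * INR n) * (1 + INR n))
    * (poch (1/3) n / poch (3/2) n) * / (-4) ^ n) (12 * S0).
Proof.
  intros HS. replace (12 * S0) with (432 / 36 * S0) by field.
  apply (wz_series (fun n k => Kg r1_5 r2_5 n k * P_5 n) (fun n k => Kg r1_5 r2_5 n k * Q_5 n k)
    (fun n : nat =>
    (90 * INR n ^ 2 + 111 * INR n + 31)
      / ((1 + 6 * INR n) * (2 + 3 * INR n) * (1 + INR n))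
    * (poch (1/3) n / poch (3/2) n) * / (-4) ^ n) (fun k : nat => 1 / ((3 * INR k + 1) * (INR k + 1))) 36 432 S0 (3/4)); try lra.
  - intros n k _. apply wz_gen; [apply c_5 | apply b_5].
  - intros k. rewrite (Kg0 r1_5 r2_5 r20_5). unfold P_5. simpl (INR O). field. pose proof (pos_INR k). nzs.
  - intros n. apply (diag_gen r1_5 r2_5 P_5 Q_5 (fun n : nat =>
    (90 * INR n ^ 2 + 111 * INR n + 31)
      / ((1 + 6 * INR n) * (2 + 3 * INR n) * (1 + INR n))
    * (poch (1/3) n / poch (3/2) n) * / (-4) ^ n) 36); [apply c_5 | apply base_5 | apply Wnz_5 | apply step_5].
  - intros n k H. apply (ratio_gen _ _ _ _ c_5 Qpos_5 rat_5); auto.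
  - apply G0_5.
  - auto.
Qed.


Theorem proposition3p1 :
  is_series (fun k : nat => 1 / ((3 * INR k + 1) * (INR k + 1))) S0 /\
  is_series (fun n : nat =>
    (9 * INR n + 7) / ((INR n + 1) * (3 * INR n + 1))
    * (poch (5/3) n / poch (3/2) n) * / 4 ^ n) (6 * S0) /\
  is_series (fun n : nat =>
    (9 * INR n + 5) / (INR n + 1)
    * (poch (1/3) n ^ 2 / (poch (5/3) n * poch (7/6) n)) * / 4 ^ n) (4 * S0) /\
  is_series (fun n : nat =>
    (189 * INR n ^ 2 + 222 * INR n + 61)
    * (poch (1/3) n ^ 2 * poch 1 n / (poch (7/6) n * poch (3/2) n ^ 2))
    * / 64 ^ n) (48 * S0) /\
  is_series (fun n : nat =>
    (30 * INR n ^ 2 + 35 * INR n + 11) / ((1 + 2 * INR n) * (1 + INR n))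
    * (poch (1/3) n / poch (7/6) n) * / (-4) ^ n) (8 * S0) /\
  is_series (fun n : nat =>
    (90 * INR n ^ 2 + 111 * INR n + 31)
      / ((1 + 6 * INR n) * (2 + 3 * INR n) * (1 + INR n))
    * (poch (1/3) n / poch (3/2) n) * / (-4) ^ n) (12 * S0).
Proof.
  pose proof S0_series as HS.
  split; [exact HS|].
  split; [apply (ser_1 S0 HS)|].
  split; [apply (ser_2 S0 HS)|].
  split; [apply (ser_3 S0 HS)|].
  split; [apply (ser_4 S0 HS)|].
  apply (ser_5 S0 HS).
Qed.
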